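(* Consider the transverse-field Ising chain $H=-J\sum_\ell[\sigma^x_\ell\sigma^x_{\ell+1}+h\sigma^z_\ell]$ on a periodic chain of $L$ sites, restricted to the antiperiodic (Neveu–Schwarz) fermion sector with momenta $p=2\pi(n+1/2)/L$, $n$ integer, and let $\alpha_p$ be the Bogoliubov fermions diagonalizing the post-quench Hamiltonian, $n_p=\alpha^\dagger_p\alpha_p$. For $0<p<\pi$ define the ghost fermions $g^\dagger_p=(1-n_{-p})\alpha^\dagger_p+n_{-p}\alpha_p$ and the pair fermions $d^\dagger_p=\prod_{0<k<p}(2\tilde d^\dagger_k\tilde d_k-1)\prod_{0<k\neq p}(2g^\dagger_kg_k-1)\,\tilde d^\dagger_p$ with $\tilde d^\dagger_p=(\alpha^\dagger_p+\alpha_p)\alpha^\dagger_{-p}$; these satisfy canonical anticommutation relations, with $n^d_p=d^\dagger_pd_p$, $n^g_p=g^\dagger_pg_p$, $e^{i\pi\mathcal N_g}=\prod_{0<k<\pi}(2n^g_k-1)$, and the inverse map $\alpha^\dagger_p=(1-n^d_p)g^\dagger_p+n^d_pg_p$, $\alpha^\dagger_{-p}=\prod_{0<k<p}(2n^d_k-1)\,d^\dagger_p\,e^{i\pi\mathcal N_g}(g^\dagger_p-g_p)$. Let $a_i=\frac{1}{\sqrt L}\sum_{0<p<\pi}W_i(p)g_p+W_i(-p)g^\dagger_p$ (with $W_i(-p)=W_i^\dagger(p)$) be Majorana fermions that are linear combinations of the Bogoliubov fermions $\alpha$, written via the inverse map so that the coefficients $W_i(p)$ are operators built from pair fermions and $e^{i\pi\mathcal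 N_g}$ and commute with all ghost operators. Then $$G_0\,a_1\cdots a_n\,G_0=\frac{1}{L^{n/2}}\sum_{-\pi<p_1,\dots,p_n<\pi}W_1(p_1)\cdots W_n(p_n)\,\mathrm{Pf}\Bigl([\theta(p_i)\delta_{p_i,-p_j}]_{i<j}\Bigr)\,G_0,$$ where $[M(i,j)]_{i<j}$ denotes the skew-symmetric $n\times n$ matrix whose upper triangular entries are $M(i,j)$, $\theta$ is the Heaviside step function, $\delta$ is the Kronecker delta, and $G_0\equiv\prod_{0<k<\pi}g_kg^\dagger_k$ is the projector on the ghost vacuum.
   Context: Setting: time evolution after a quench $h_0\to h$ of the transverse field in the periodic transverse-field Ising chain, starting from the ground state at $h_0$. The time-averaged (diagonal, ''pair'') ensemble is $\rho_{PE}=\prod_{0<k}g_kg^\dagger_k\exp\bigl(\sum_{0<p}\log K^2(p)\,d^\dagger_pd_p-\log(1+K^2(p))\bigr)$, i.e. the ghost-vacuum projector times a Gaussian state of pair fermions. Local spin operators are strings of Jordan–Wigner Majorana fermions $a_{2\ell}=\prod_{j<\ell}\sigma^z_j\sigma^x_\ell$, $a_{2\ell-1}=\prod_{j<\ell}\sigma^z_j\sigma^y_\ell$, which are linear in the $\alpha$'s and hence linear in the ghost operators. *)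

(* Defs.v *)
From HB Require Import structures.
From mathcomp Require Import all_boot all_order all_algebra all_fingroup.
Set Implicit Arguments. Unset Strict Implicit. Unset Printing Implicit Defensive.
Import Order.TTheory GRing.Theory Num.Theory.
Local Open Scope ring_scope.

(* Momenta of the Neveu-Schwarz sector of a chain of L sites lying in
   (-pi, pi):  p = 2 pi (n + 1/2) / L.  The positive ones (0 < p < pi) are
   n = 0, ..., L./2 - 1; a momentum is encoded as (sign, k) with
   k : 'I_(L./2): (true, k) is p_k = 2 pi (k + 1/2)/L > 0 and (false, k) is
   -p_k.  *)
Definition mom (L : nat) := (bool * 'I_(L./2))%type.

Definition momneg (L : nat) (p : mom L) : mom L := (~~ p.1, p.2).

(* Heaviside step function theta(p) (p is never 0). *)
Definition theta (L : nat) (p : mom L) : bool := p.1.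

Definition skew_upper (R : zmodType) (n : nat) (M : 'I_n -> 'I_n -> R)
  : 'M[R]_n :=
  \matrix_(i, j) (if (i < j)%N then M i j
                  else if (j < i)%N then - M j i else 0).

Definition pfaffian (R : fieldType) (n : nat) (A : 'M[R]_n) : R :=
  if odd n then 0
  else ((2 ^ n./2 * (n./2)`!)%N%:R)^-1 *
       \sum_(s : 'S_n) (-1) ^+ s *
         \prod_(i : 'I_n | ~~ odd i) \prod_(j : 'I_n | val j == i.+1)
            A (s i) (s j).

(* Main.v *)
Require Import Defs.
From HB Require Import structures.
From mathcomp Require Import all_boot all_order all_algebra all_fingroup.
From mathcomp Require Import zify.
Set Implicit Arguments. Unset Strict Implicit. Unset Printing Implicit Defensive.
Import Order.TTheory GRing.Theory Num.Theory.
Local Open Scope ring_scope.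



Section Pf.
Variable R : comNzRingType.

Lemma sum_lift_perm n (i0 j0 : 'I_n.+1) (f : 'S_n.+1 -> R) :
  \sum_(s : 'S_n.+1 | s i0 == j0) f s = \sum_(s : 'S_n) f (lift_perm i0 j0 s).
Proof.
rewrite (reindex (lift_perm i0 j0)); last first.
  pose ulsf i (s : 'S_n.+1) k := odflt k (unlift (s i) (s (lift i k))).
  have ulsfK i (s : 'S_n.+1) k: lift (s i) (ulsf i s k) = s (lift i k).
    rewrite /ulsf; have:= neq_lift i k.
    by rewrite -(can_eq (permK s)) => /unlift_some[] ? ? ->.
  have inj_ulsf: injective (ulsf i0 _).
    move=> s; apply: can_inj (ulsf (s i0) s^-1%g) _ => k'.
    by rewrite {1}/ulsf ulsfK !permK liftK.
  exists (fun s => perm (inj_ulsf s)) => [s _ | s].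
    by apply/permP=> k'; rewrite permE /ulsf lift_perm_lift lift_perm_id liftK.
  move/(s _ =P _) => si0; apply/permP=> k.
  case: (unliftP i0 k) => [k'|] ->; rewrite ?lift_perm_id //.
  by rewrite lift_perm_lift -si0 permE ulsfK.
by apply: eq_bigl => s; rewrite lift_perm_id eqxx.
Qed.

Definition Gp n (A : 'M[R]_n) (s : 'S_n) : R :=
  \prod_(i : 'I_n | ~~ odd i) \prod_(j : 'I_n | val j == i.+1) A (s i) (s j).
Definition pfsum n (A : 'M[R]_n) : R := \sum_(s : 'S_n) (-1) ^+ s * Gp A s.

Definition nx n (i : 'I_n) : 'I_n := insubd i i.+1.

Lemma nx_val n (i : 'I_n) : ~~ odd n -> ~~ odd i -> val (nx i) = i.+1.
Proof.
move=> on oi; rewrite /nx val_insubd.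
case: ifP => // /negbT; rewrite -leqNgt => h.
have: i.+1 = n by apply/eqP; rewrite eqn_leq h ltn_ord.
move/(congr1 odd) => /= e; by move: on; rewrite -e oi.
Qed.

Lemma Gp_nx n (A : 'M[R]_n) s : ~~ odd n ->
  Gp A s = \prod_(i : 'I_n | ~~ odd i) A (s i) (s (nx i)).
Proof.
move=> on; apply: eq_bigr => i oi.
rewrite (big_pred1 (nx i)) // => j /=.
by rewrite -[j == _](inj_eq val_inj) /= nx_val.
Qed.

End Pf.



Lemma evenE x : ~~ odd x -> x = (x./2).*2.
Proof. by move=> h; rewrite -{1}(odd_double_half x) (negbTE h). Qed.

Lemma oddE x : odd x -> x = (x./2).*2.+1.
Proof. by move=> h; rewrite -{1}(odd_double_half x) h. Qed.

Section Inv.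
Variable R : comNzRingType.
Variable m : nat.
Hypothesis em : ~~ odd m.
Variable A : 'M[R]_m.+2.
Hypothesis skew : forall i j, A i j = - A j i.

Definition F (s : 'S_m.+2) := (-1) ^+ s * Gp A s.

Let on : ~~ odd m.+2. Proof. by rewrite /= negbK. Qed.

Lemma nxv (i : 'I_m.+2) : ~~ odd i -> val (nx i) = i.+1.
Proof. exact: nx_val. Qed.

Lemma nxn (i : 'I_m.+2) : ~~ odd i -> (nx i : nat) = i.+1.
Proof. exact: nx_val. Qed.

Lemma inv_swap (x : 'I_m.+2) u : ~~ odd x -> F (tperm x (nx x) * u) = F u.
Proof.
move=> ox; rewrite /F odd_permM odd_tperm signr_addb.
have -> : (x != nx x) = true by rewrite -(inj_eq val_inj) nxv //=; lia.
rewrite expr1 mulN1r mulNr -mulrN; congr (_ * _).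
rewrite !Gp_nx // (bigD1 x) //= [in RHS](bigD1 x) //= permM tpermL.
rewrite permM tpermR [A (u (nx x)) _]skew mulNr opprK; congr (_ * _).
apply: eq_bigr => i /andP [oi ix].
have h1 : x != i by rewrite eq_sym.
have h2 : nx x != i.
  by rewrite -(inj_eq val_inj) nxv //; apply/eqP => e; move: oi; rewrite -e /= ox.
have h3 : x != nx i.
  rewrite -(inj_eq val_inj) nxv //; apply/eqP => e; move: ox; rewrite e /=.
  by rewrite oi.
have h4 : nx x != nx i.
  apply/eqP => /(congr1 val) /=; rewrite !nxv //; case=> /val_inj e.
  by rewrite e eqxx in ix.
by rewrite !permM !tpermD.
Qed.


Lemma neq_par n (a b : 'I_n) : odd a != odd b -> a != b.
Proof. by apply: contraNneq => ->. Qed.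

Let o : 'I_m.+2 := ord0.

Lemma odd_nx (i : 'I_m.+2) : ~~ odd i -> odd (nx i).
Proof. by move=> oi; rewrite nxv //= oi. Qed.

Section Block.
Variable x : 'I_m.+2.
Hypothesis ox : ~~ odd x.
Let o1 := nx o.
Let y := nx x.
Definition sig := (tperm o x * tperm o1 y)%g.

Let oo1 : odd o1. Proof. exact: odd_nx. Qed.
Let oy : odd y. Proof. exact: odd_nx. Qed.
Let oo : ~~ odd o. Proof. by []. Qed.

Lemma sigP1 (i : 'I_m.+2) : odd (sig i) = odd i.
Proof.
rewrite /sig permM; case: (tpermP o x i) => [->|->|ne1 ne2].
- by rewrite tpermD ?neq_par ?oo1 ?oy ?(negbTE ox).
- by rewrite tpermD ?neq_par ?oo1 ?oy ?(negbTE ox).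
case: (tpermP o1 y i) => [->|->|] //; by rewrite ?oo1 ?oy.
Qed.

Lemma sigP2 (i : 'I_m.+2) : ~~ odd i -> sig (nx i) = nx (sig i).
Proof.
move=> oi; rewrite /sig !permM.
case: (i =P o) => [->|io].
  rewrite -/o1 (tpermD (x:=o)) ?neq_par ?oo1 ?(negbTE ox) // tpermL tpermL.
  by rewrite tpermD ?neq_par ?oo1 ?oy ?(negbTE ox).
case: (i =P x) => [->|ix].
  rewrite -/y (tpermD (x:=o)) ?neq_par ?oy ?(negbTE ox) // tpermR tpermR.
  by rewrite tpermD ?neq_par ?oo1 ?oy.
have h1 : o != i by apply/eqP => e; apply: io; rewrite e.
have h2 : x != i by apply/eqP => e; apply: ix; rewrite e.
have oni : odd (nx i) by exact: odd_nx.
have a1 : o != nx i by rewrite neq_par // oni.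
have a2 : x != nx i by rewrite neq_par // oni (negbTE ox).
have a5 : o1 != i by rewrite neq_par // oo1 (negbTE oi).
have a6 : y != i by rewrite neq_par // oy (negbTE oi).
have a3 : o1 != nx i.
  apply/eqP => /(congr1 val); rewrite /o1 !nxv //= => e; apply: io.
  apply: val_inj => /=; lia.
have a4 : y != nx i.
  apply/eqP => /(congr1 val); rewrite /y !nxv //= => e; apply: ix.
  apply: val_inj => /=; lia.
by rewrite (tpermD h1 h2) (tpermD a1 a2) (tpermD a3 a4) (tpermD a5 a6).
Qed.

Lemma inv_block u : F (sig * u) = F u.
Proof.
rewrite /F odd_permM /sig odd_permM !odd_tperm.
have -> : (o1 != y) = (o != x).
  by rewrite -!(inj_eq val_inj) /o1 /y !nxv.
rewrite addbb addFb; congr (_ * _).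
rewrite !Gp_nx // [in RHS](reindex_inj (h := sig) (@perm_inj _ sig)).
apply: eq_big => i; first by rewrite sigP1.
by move=> oi; rewrite !permM; have := sigP2 oi; rewrite /sig !permM => ->.
Qed.

Lemma sig_x : sig x = o.
Proof.
rewrite /sig permM tpermR tpermD // ?neq_par ?oo1 ?oy //.
Qed.
End Block.

Lemma relabel (t : 'I_m.+2) : exists tau : 'S_m.+2,
  tau t = o /\ forall u, F (tau * u) = F u.
Proof.
case ot: (odd t).
  pose x : 'I_m.+2 := inord t.-1.
  have vx : (x : nat) = t.-1 by rewrite /x inordK // (leq_ltn_trans (leq_pred _)).
  have ox : ~~ odd x.
    by rewrite vx; move: ot; case: (val t) => //= k; rewrite negbK.
  have tx : nx x = t.
    apply: val_inj; rewrite nxv // vx /=; move: ot; by case: (nat_of_ord t).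
  exists (tperm x (nx x) * sig x)%g; split.
    by rewrite permM tx tpermR sig_x.
  by move=> u; rewrite -mulgA inv_swap // inv_block.
exists (sig t); split; first by rewrite sig_x // ot.
by move=> u; rewrite inv_block // ot.
Qed.

Definition Asub (j : 'I_m.+1) : 'M[R]_m :=
  \matrix_(a, b) A (lift o (lift j a)) (lift o (lift j b)).

Lemma partition_val n (f : 'S_n.+1 -> R) (i0 : 'I_n.+1) :
  \sum_(s : 'S_n.+1) f s = \sum_(t : 'I_n.+1) \sum_(s : 'S_n.+1 | s i0 == t) f s.
Proof.
rewrite [RHS](exchange_big_dep xpredT) //=; apply: eq_bigr => s _.
by rewrite (big_pred1 (s i0)) // => t /=; rewrite eq_sym.
Qed.

Lemma partition_pos n (f : 'S_n.+1 -> R) (v0 : 'I_n.+1) :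
  \sum_(s : 'S_n.+1) f s = \sum_(t : 'I_n.+1) \sum_(s : 'S_n.+1 | s t == v0) f s.
Proof.
rewrite [RHS](exchange_big_dep xpredT) //=; apply: eq_bigr => s _.
rewrite (big_pred1 ((s^-1)%g v0)) // => t /=.
by apply/eqP/eqP => [<-|->]; rewrite ?permK ?permKV.
Qed.

Lemma F_lift (j : 'I_m.+1) (v : 'S_m) :
  F (lift_perm o o (lift_perm ord0 j v)) =
  (-1) ^+ j * A o (lift o j) * ((-1) ^+ v * Gp (Asub j) v).
Proof.
rewrite /F !odd_lift_perm /= signr_addb signr_odd -!mulrA; congr (_ * _).
rewrite mulrCA; congr (_ * _).
rewrite !Gp_nx // big_mkcond big_ord_recl big_ord_recl /=.
have -> : nx o = lift o ord0 by apply: val_inj; rewrite nxv.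
rewrite lift_perm_id lift_perm_lift lift_perm_id mul1r; congr (_ * _).
rewrite [in RHS]big_mkcond; apply: eq_bigr => i _.
rewrite add0n !negbK; case: ifP => // oi.
have e : ~~ odd (lift ord0 (lift ord0 i) : 'I_m.+2) by rewrite !lift0 /= negbK oi.
have -> : nx (lift ord0 (lift ord0 i)) = lift o (lift ord0 (nx i)).
  apply: val_inj => /=; rewrite nxn //.
  by rewrite /o !lift0 nx_val // oi.
by rewrite !lift_perm_lift !mxE.
Qed.

Lemma pfsum_exp : pfsum A =
  (m.+2)%:R * \sum_(j : 'I_m.+1) (-1) ^+ j * A o (lift o j) * pfsum (Asub j).
Proof.
have -> : pfsum A = \sum_(s : 'S_m.+2) F s by [].
rewrite (partition_pos _ o).
rewrite (eq_bigr (fun _ => \sum_(s : 'S_m.+2 | s o == o) F s)); last first.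
  move=> t _; have [tau [taut taui]] := relabel t.
  rewrite (reindex_inj (mulgI tau)); apply: eq_big => s; last by move=> _; apply: taui.
  by rewrite permM taut.
rewrite sumr_const card_ord -[_ *+ _]mulr_natl; congr (_ * _).
rewrite sum_lift_perm (partition_val _ ord0); apply: eq_bigr => j _.
rewrite sum_lift_perm big_distrr; apply: eq_bigr => v _.
exact: F_lift.
Qed.

End Inv.



Lemma cst_rec m : ~~ odd m ->
  (2 ^ (m.+2)./2 * ((m.+2)./2)`!)%N = (m.+2 * (2 ^ m./2 * (m./2)`!))%N.
Proof.
move=> em; rewrite /= expnS factS.
have e := evenE em.
set h := m./2 in e *.
clearbody h; rewrite e -!mul2n. nia.
Qed.

Lemma lift_lt n (j : 'I_n.+1) (a b : 'I_n) :
  (lift (ord0 : 'I_n.+2) (lift j a) < lift (ord0 : 'I_n.+2) (lift j b))%N = (a < b)%N.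
Proof.
rewrite !lift0 ltnS /= /bump.
case: (leqP j a); case: (leqP j b) => /= ? ?; lia.
Qed.

Lemma pfaffian_rec (R : numFieldType) m (M : 'I_m.+2 -> 'I_m.+2 -> R) :
  pfaffian (skew_upper M) =
  \sum_(j : 'I_m.+1) (-1) ^+ j * M ord0 (lift ord0 j) *
     pfaffian (skew_upper (fun a b : 'I_m => M (lift ord0 (lift j a)) (lift ord0 (lift j b)))).
Proof.
rewrite /pfaffian /=; rewrite negbK; case: ifP => om.
  by rewrite big1 // => j _; rewrite mulr0.
have em : ~~ odd m by rewrite om.
have skew : forall i j, skew_upper M i j = - skew_upper M j i.
  move=> i j; rewrite !mxE; case: ltngtP => //; by rewrite ?opprK ?oppr0.
have := pfsum_exp em skew; rewrite /pfsum /Gp => ->.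
rewrite (_ : (2 ^ (m./2).+1 * ((m./2).+1)`!)%N = (m.+2 * (2 ^ m./2 * (m./2)`!))%N); last exact: cst_rec.
rewrite natrM invfM -!mulrA.
rewrite mulrCA mulKf ?pnatr_eq0 // big_distrr.
apply: eq_bigr => j _; rewrite mulrCA; congr (_ * _).
have -> : Asub (skew_upper M) j = skew_upper (fun a b : 'I_m => M (lift ord0 (lift j a)) (lift ord0 (lift j b))).
  by apply/matrixP => a b; rewrite !mxE !lift_lt.
by rewrite !mxE lift0.
Qed.



Section Anti.
Variables (R : numFieldType) (A : algType R).

Lemma prod_lift_succ m (Z : 'I_m.+1 -> A) (j : 'I_m) :
  \prod_(i < m) Z (lift (lift ord0 j) i) =
  Z ord0 * \prod_(i < m.-1) Z (lift ord0 (lift j i)).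
Proof.
case: m Z j => [|m] Z j; first by case: j.
rewrite big_ord_recl; congr (_ * _).
  by congr (Z _); apply: val_inj; rewrite /= /bump; lia.
apply: eq_bigr => i _; congr (Z _); apply: val_inj; rewrite /= /bump /=; lia.
Qed.

Lemma anti_exp m (x : A) (Z : 'I_m -> A) (c : 'I_m -> R) :
  (forall i, x * Z i + Z i * x = (c i)%:A) ->
  x * \prod_(i < m) Z i =
  \sum_(j < m) ((-1) ^+ j * c j) *: \prod_(i < m.-1) Z (lift j i)
  + (-1) ^+ m *: (\prod_(i < m) Z i * x).
Proof.
elim: m Z c => [|m IH] Z c hc.
  by rewrite !big_ord0 add0r scale1r mul1r mulr1.
rewrite big_ord_recl mulrA.
have -> : x * Z ord0 = (c ord0)%:A - Z ord0 * x.
  by rewrite -(hc ord0) addrK.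
rewrite mulrBl -[Z ord0 * x * _]mulrA.
have := IH (fun i => Z (lift ord0 i)) (fun i => c (lift ord0 i)) (fun i => hc _).
rewrite /= => ->.
rewrite big_ord_recl /= expr0 mul1r mulr_algl -addrA; congr (_ + _).
rewrite mulrDr mulr_sumr opprD; congr (_ + _).
  rewrite -sumrN; apply: eq_bigr => j _.
  rewrite prod_lift_succ -scalerAr exprS mulN1r !mulNr scaleNr.
  done.
rewrite -scalerAr exprS mulN1r scaleNr !mulrA.
done.
Qed.
End Anti.



Lemma pf0 (R : numFieldType) (M : 'M[R]_0) : pfaffian M = 1.
Proof.
rewrite /pfaffian /= invr1 mul1r (big_pred1 1%g).
  by rewrite odd_perm1 expr0 mul1r big1 // => -[].
by move=> s /=; apply/esym/eqP/permP => -[].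
Qed.

Section Fermi.
Variables (R : numClosedFieldType) (A : algType R) (L : nat).
Variables (g gd : 'I_(L./2) -> A).
Hypothesis car_ggd : forall k l, g k * gd l + gd l * g k = (k == l)%:R.
Hypothesis car_gg : forall k l, g k * g l + g l * g k = 0.
Hypothesis car_gdgd : forall k l, gd k * gd l + gd l * gd k = 0.

Definition Xop (q : mom L) : A := if q.1 then g q.2 else gd q.2.
Definition Pk k := g k * gd k.
Definition G0 := \prod_(k < L./2) Pk k.
Definition Mp n (p : 'I_n -> mom L) (i j : 'I_n) : R :=
  ((theta (p i) && (p i == momneg (p j))) %:R : R).

Lemma self0 (y : A) : y + y = 0 -> y = 0.
Proof.
move=> h; have : (2%:R : R) *: y = 0 by rewrite scaler_nat mulr2n.
by move/eqP; rewrite scaler_eq0 pnatr_eq0 /= => /eqP.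
Qed.

Lemma gg0 k : g k * g k = 0. Proof. exact/self0/car_gg. Qed.
Lemma gdgd0 k : gd k * gd k = 0. Proof. exact/self0/car_gdgd. Qed.

Lemma anti (x y : A) (c : A) : x * y + y * x = c -> x * y = c - y * x.
Proof. by move=> <-; rewrite addrK. Qed.

Lemma anti2 (x y : A) (c : A) : x * y + y * x = c -> y * x = c - x * y.
Proof. by move=> <-; rewrite addrAC subrr add0r. Qed.

Lemma com_g_P k l : k != l -> g k * Pk l = Pk l * g k.
Proof.
move=> kl; rewrite /Pk.
have h1 : g k * g l = - (g l * g k) by rewrite (anti (car_gg k l)) sub0r.
have h2 : g k * gd l = - (gd l * g k).
  by rewrite (anti (car_ggd k l)) (negbTE kl) /= sub0r.
by rewrite mulrA h1 mulNr -[g l * g k * gd l]mulrA h2 mulrN opprK mulrA.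
Qed.

Lemma com_gd_P k l : k != l -> gd k * Pk l = Pk l * gd k.
Proof.
move=> kl; rewrite /Pk.
have h1 : gd k * g l = - (g l * gd k).
  by rewrite (anti2 (car_ggd l k)) eq_sym (negbTE kl) /= sub0r.
have h2 : gd k * gd l = - (gd l * gd k) by rewrite (anti (car_gdgd k l)) sub0r.
by rewrite mulrA h1 mulNr -[g l * gd k * gd l]mulrA h2 mulrN opprK mulrA.
Qed.

Lemma com_P_P k l : Pk k * Pk l = Pk l * Pk k.
Proof.
case: (eqVneq k l) => [->//|kl].
by rewrite {1}/Pk -mulrA com_gd_P // mulrA com_g_P // -mulrA.
Qed.

Lemma PP k : Pk k * Pk k = Pk k.
Proof.
rewrite /Pk mulrA -[g k * gd k * g k]mulrA (anti2 (car_ggd k k)) eqxx /=.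
rewrite mulrBr mulrBl mulr1 mulrA gg0 !mul0r subr0 //.
Qed.

Lemma g_prod (r : seq 'I_(L./2)) k : k \in r -> g k * \prod_(l <- r) Pk l = 0.
Proof.
elim: r => // l r IH; rewrite in_cons big_cons; case: (eqVneq k l) => [<- _|kl /= kr].
  by rewrite mulrA /Pk mulrA gg0 !mul0r.
by rewrite mulrA com_g_P // -mulrA IH // mulr0.
Qed.

Lemma g_G0 k : g k * G0 = 0.
Proof. by rewrite /G0 g_prod // mem_index_enum. Qed.

Lemma prod_gd (r : seq 'I_(L./2)) k : k \in r -> \prod_(l <- r) Pk l * gd k = 0.
Proof.
elim: r => // l r IH; rewrite in_cons big_cons.
move=> h; case kr: (k \in r); first by rewrite -mulrA IH // mulr0.
move: h; rewrite kr orbF => /eqP <-.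
have : GRing.comm (gd k) (\prod_(i <- r) Pk i).
  rewrite big_seq; apply: commr_prod => i ir; apply: com_gd_P.
  by apply: contraFneq kr => ->.
move=> hc; rewrite -mulrA -hc mulrA /Pk -[g k * gd k * gd k]mulrA gdgd0 mulr0 mul0r //.
Qed.

Lemma G0_gd k : G0 * gd k = 0.
Proof. by rewrite /G0 prod_gd // mem_index_enum. Qed.

Lemma prod_idem (r : seq 'I_(L./2)) :
  \prod_(l <- r) Pk l * \prod_(l <- r) Pk l = \prod_(l <- r) Pk l.
Proof.
elim: r => [|l r IH]; first by rewrite big_nil mulr1.
rewrite big_cons -mulrA [\prod_(i <- r) Pk i * _]mulrA.
have : GRing.comm (Pk l) (\prod_(i <- r) Pk i).
  by apply: commr_prod => i _; apply: com_P_P.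
rewrite /GRing.comm => <-; by rewrite -mulrA IH mulrA PP.
Qed.

Lemma G0G0 : G0 * G0 = G0.
Proof. by rewrite /G0 prod_idem. Qed.

Lemma comm_G0 (w : A) : (forall k, w * g k = g k * w) ->
  (forall k, w * gd k = gd k * w) -> w * G0 = G0 * w.
Proof.
move=> hg hgd; have : GRing.comm w G0.
  apply: commr_prod => k _; rewrite /GRing.comm /Pk mulrA hg -mulrA hgd mulrA //.
by [].
Qed.

Lemma natA (b : bool) : (((b%:R : R)%:A) : A) = b%:R.
Proof. by case: b; rewrite ?scale1r ?scale0r. Qed.

Lemma wick n (p : 'I_n -> mom L) :
  G0 * \prod_(i < n) Xop (p i) * G0 = pfaffian (skew_upper (Mp p)) *: G0.
Proof.
elim/ltn_ind: n p => n IH p.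
case: n IH p => [|m] IH p.
  by rewrite big_ord0 mulr1 G0G0 pf0 scale1r.
rewrite big_ord_recl.
have E : G0 * (Xop (p ord0) * \prod_(i < m) Xop (p (lift ord0 i))) * G0 =
  (if (p ord0).1 then \sum_(j < m) ((-1) ^+ j * ((p (lift ord0 j) == (false, (p ord0).2))%:R))
     * pfaffian (skew_upper (Mp (fun i => p (lift ord0 (lift j i))))) else 0) *: G0.
  case e0 : (p ord0) => [b k] /=; case: b e0 => e0; last first.
    by rewrite /Xop /= !mulrA G0_gd !mul0r scale0r.
  rewrite [Xop _]/Xop /=.
  rewrite (@anti_exp _ _ _ _ _ (fun j => ((p (lift ord0 j) == (false,k))%:R))); last first.
    move=> i; case: (p (lift ord0 i)) => [[] l] /=.
      by rewrite car_gg scale0r.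
    by rewrite car_ggd natA eq_sym.
  rewrite /=.
  rewrite mulrDr mulrDl -scalerAr -scalerAl.
  rewrite -[G0 * (_ * g k) * G0]mulrA -[_ * g k * G0]mulrA g_G0 !mulr0 scaler0 addr0.
  rewrite mulr_sumr mulr_suml scaler_suml; apply: eq_bigr => j _.
  rewrite -scalerAr -scalerAl -scalerA.
  have hlt : (m.-1 < m.+1)%N by rewrite (leq_ltn_trans (leq_pred _) (ltnSn _)).
  by rewrite (IH m.-1 hlt (fun i => p (lift ord0 (lift j i)))).
rewrite E; congr (_ *: _).
case: m IH p E => [|m'] IH p E.
  by rewrite /pfaffian /= big_ord0; case: ifP.
rewrite pfaffian_rec; case e0: (p ord0) => [b k]; case: b e0 => e0 /=.
  apply: eq_bigr => j _; congr (_ * _ * _).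
  rewrite /Mp e0 /theta /momneg /=; case: (p (lift ord0 j)) => [[] l] //=.
  by rewrite !xpair_eqE /= eq_sym.
by rewrite big1 // => j _; rewrite /Mp e0 /theta /= mulr0 mul0r.
Qed.

End Fermi.



Lemma prod_split (R : numFieldType) (A : algType R) n (F Y : 'I_n -> A) :
  (forall i j, Y i * F j = F j * Y i) ->
  \prod_(i < n) (F i * Y i) = \prod_(i < n) F i * \prod_(i < n) Y i.
Proof.
elim: n F Y => [|n IH] F Y h; first by rewrite !big_ord0 mulr1.
rewrite !big_ord_recl (IH (fun i => F (lift ord0 i)) (fun i => Y (lift ord0 i))) //.
have c : GRing.comm (Y ord0) (\prod_(i < n) F (lift ord0 i)).
  by apply: commr_prod => i _; apply: h.
by rewrite -!mulrA [Y ord0 * (_ * _)]mulrA c -!mulrA.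
Qed.

Theorem lemma1 (R : numClosedFieldType) (A : algType R) (L : nat)
  (L_gt0 : (0 < L)%N)
  (dag : A -> A)
  (dag_add : forall x y, dag (x + y) = dag x + dag y)
  (dag_scale : forall (c : R) x, dag (c *: x) = c^* *: dag x)
  (dag_mul : forall x y, dag (x * y) = dag y * dag x)
  (dag_invol : forall x, dag (dag x) = x)
  (g gd : 'I_(L./2) -> A)
  (gd_def : forall k, gd k = dag (g k))
  (car_ggd : forall k l, g k * gd l + gd l * g k = (k == l)%:R)
  (car_gg : forall k l, g k * g l + g l * g k = 0)
  (car_gdgd : forall k l, gd k * gd l + gd l * gd k = 0)
  (n : nat) (W : 'I_n -> mom L -> A)
  (W_adj : forall i k, W i (false, k) = dag (W i (true, k)))
  (W_g : forall i q k, W i q * g k = g k * W i q)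
  (W_gd : forall i q k, W i q * gd k = gd k * W i q) :
  let G0 := \prod_(k < L./2) (g k * gd k) in
  let a := fun i : 'I_n =>
    (sqrtC (L%:R : R))^-1 *:
      \sum_(k < L./2) (W i (true, k) * g k + W i (false, k) * gd k) in
  G0 * (\prod_(i < n) a i) * G0 =
  ((sqrtC (L%:R : R))^-1) ^+ n *:
    \sum_(p : {ffun 'I_n -> mom L})
      (\prod_(i < n) W i (p i)) *
      (pfaffian (skew_upper (fun i j : 'I_n =>
                   ((theta (p i) && (p i == momneg (p j))) %:R : R)))
        *: G0).
Proof.
move=> G0' a.
set c := (sqrtC (L%:R : R))^-1.
have eG : G0' = G0 g gd by [].
have ea : forall i, a i = c *: \sum_(q : mom L) W i q * Xop g gd q.
  move=> i; rewrite /a; congr (_ *: _).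
  rewrite (eq_bigr (fun q => W i (q.1, q.2) * Xop g gd (q.1, q.2))); last by case.
  have := pair_bigA (@GRing.add A) (fun b k => W i (b, k) * Xop g gd (b, k)).
  rewrite /= => <-.
  rewrite exchange_big /=; apply: eq_bigr => k _; by rewrite big_bool.
rewrite (eq_bigr _ (fun i _ => ea i)) scaler_prod prodr_const card_ord.
rewrite bigA_distr_bigA /= eG.
have WX : forall i q q', W i q * Xop g gd q' = Xop g gd q' * W i q.
  by move=> i q [[] k] /=; rewrite ?W_g ?W_gd.
rewrite -scalerAr -scalerAl mulr_sumr mulr_suml; congr (_ *: _).
apply: eq_bigr => p _.
rewrite (@prod_split _ _ _ (fun i => W i (p i)) (fun i => Xop g gd (p i))); last first.
  by move=> i j; rewrite WX.
set PW := \prod_(i < n) W i (p i).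
have cW : PW * G0 g gd = G0 g gd * PW.
  apply: comm_G0.
    move=> k; have : GRing.comm (g k) PW by apply: commr_prod => i _; rewrite /GRing.comm W_g.
    by [].
  move=> k; have : GRing.comm (gd k) PW by apply: commr_prod => i _; rewrite /GRing.comm W_gd.
  by [].
rewrite mulrA -cW -!mulrA [G0 g gd * (_ * G0 g gd)]mulrA.
rewrite (wick car_ggd car_gg car_gdgd).
by [].
Qed.
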